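(* Let $\mathfrak{A}$ be a $(\circ,\wedge,\mathsf{A})$-algebra and $\theta$ a representation of $\mathfrak{A}$ by partial functions. Then $\theta$ is atomic if and only if $\theta$ is complete.
   Context: A $(\circ,\wedge,\mathsf{A})$-algebra is a set with two binary operations $\circ,\wedge$ and one unary operation $\mathsf{A}$. An algebra of partial functions of this signature is a set of partial functions, with base $X$ the union of all their domains and ranges, closed under: composition $f\circ g=\{(x,z)\mid \exists y\,(x,y)\in f,(y,z)\in g\}$; intersection; antidomain $\mathsf{A}(f)=\{(x,x)\mid x\in X, x\notin\mathrm{dom}(f)\}$. A representation by partial functions is an isomorphism onto such an algebra. The order on $\mathfrak{A}$ is $a\le b\iff a\wedge b=a$; a representable algebra has least element $0=\mathsf{A}(a)\circ a$. An atom is a minimal nonzero element. A representation $\theta$ is atomic if whenever $(x,y)\in\theta(a)$ for some $a\in\mathfrak{A}$, then $(x,y)\in\theta(b)$ for some atom $b$. A representation is complete if it is meet complete (for every nonempty $S$ with $\bigwedge S$ existing, $\theta(\bigwedge S)=\bigcap\theta[S]$), equivalently join complete (for every $S$ with $\bigvee S$ existing, $\theta(\bigvee S)=\bigcup\theta[S]$); these are equivalent for this signature. *)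

(* Defs.v *)
Set Implicit Arguments.

Section Defs.
Variables (T : Type) (comp meet : T -> T -> T) (ad : T -> T).

Definition le (a b : T) : Prop := meet a b = a.

Definition is_least (z : T) : Prop := forall b, le z b.

Definition atom (a : T) : Prop :=
  ~ is_least a /\ forall b, le b a -> is_least b \/ b = a.

Definition is_glb (S : T -> Prop) (m : T) : Prop :=
  (forall s, S s -> le m s) /\
  (forall l, (forall s, S s -> le l s) -> le l m).

Variables (X : Type) (theta : T -> X -> X -> Prop).

Definition is_pfun_rep : Prop :=
  (forall a x y z, theta a x y -> theta a x z -> y = z) /\
  (forall a b, (forall x y, theta a x y <-> theta b x y) -> a = b) /\
  (forall a b x z, theta (comp a b) x z <-> exists y, theta a x y /\ theta b y z) /\
  (forall a b x y, theta (meet a b) x y <-> theta a x y /\ theta b x y) /\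
  (forall a x y, theta (ad a) x y <-> x = y /\ ~ (exists z, theta a x z)) /\
  (forall x, exists a y, theta a x y \/ theta a y x).

Definition atomic_rep : Prop :=
  forall a x y, theta a x y -> exists b, atom b /\ theta b x y.

Definition complete_rep : Prop :=
  forall (S : T -> Prop) (m : T), (exists s, S s) -> is_glb S m ->
    forall x y, theta m x y <-> (forall s, S s -> theta s x y).
End Defs.

(* Main.v *)
Require Import Defs.
From Stdlib Require Import Classical.

Section S.
Variables (T : Type) (comp meet : T -> T -> T) (ad : T -> T)
  (X : Type) (theta : T -> X -> X -> Prop)
  (Hrep : is_pfun_rep comp meet ad theta).

Lemma le_iff a b : le meet a b <-> (forall x y, theta a x y -> theta b x y).
Proof.
  destruct Hrep as (Hf & Hi & Hc & Hm & Ha & _). unfold le; split.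
  - intros H x y Hab. rewrite <- H in Hab. apply Hm in Hab. tauto.
  - intros H. apply Hi. intros x y. rewrite Hm. firstorder.
Qed.

Lemma least_iff a : is_least meet a <-> (forall x y, ~ theta a x y).
Proof.
  destruct Hrep as (Hf & Hi & Hc & Hm & Ha & _). split.
  - intros H x y Hxy. specialize (H (comp (ad a) a)). pose proof (proj1 (le_iff _ _) H) as H0.
    apply H0 in Hxy. apply Hc in Hxy. destruct Hxy as (w & H1 & H2).
    apply Ha in H1. destruct H1 as [<- H1]. apply H1; eauto.
  - intros H b. apply le_iff. intros x y Hxy. exfalso; eapply H; eauto.
Qed.

Lemma empty_lemma c a x y : (forall d, theta d x y -> le meet c d) ->
  theta a x y -> le meet c a -> ~ theta c x y -> forall u v, ~ theta c u v.
Proof.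
  destruct Hrep as (Hf & Hi & Hc & Hm & Ha & _).
  intros Hd Ha1 Hca Hn u v Huv.
  assert (Hx : ~ exists w, theta c x w).
  { intros [w Hw]. assert (theta a x w) by (eapply le_iff; eauto).
    assert (w = y) by (eapply Hf; eauto). subst; tauto. }
  assert (Hdd : theta (comp (ad c) a) x y).
  { apply Hc. exists x. split; auto. apply Ha. split; auto. }
  apply Hd in Hdd. pose proof (proj1 (le_iff _ _) Hdd) as Hdd2. pose proof (Hdd2 _ _ Huv) as Huv2.
  apply Hc in Huv2. destruct Huv2 as (w & H1 & _). apply Ha in H1.
  destruct H1 as [<- H1]. apply H1; eauto.
Qed.

Lemma main : atomic_rep meet theta <-> complete_rep meet theta.
Proof.
  destruct Hrep as (Hf & Hi & Hc & Hm & Ha & _). split.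
  - intros Hat Sx m [s0 Hs0] [Hlb Hglb] x y. split.
    + intros Hxy s Hs. eapply le_iff; eauto.
    + intros H. destruct (Hat s0 x y (H s0 Hs0)) as (b & [Hb1 Hb2] & Hb).
      assert (le meet b m).
      { apply Hglb. intros s Hs.
        assert (Hle : le meet (meet b s) b).
        { apply le_iff. intros u v Huv. apply Hm in Huv. tauto. }
        destruct (Hb2 (meet b s) Hle) as [Hl | He].
        - exfalso. apply (proj1 (least_iff _) Hl x y). apply Hm. split; auto.
        - exact He. }
      eapply le_iff; eauto.
  - intros Hco a x y Haxy.
    set (Sx := fun s => theta s x y).
    destruct (classic (exists l, (forall s, Sx s -> le meet l s) /\ theta l x y))
      as [(l & Hl & Hlxy) | Hno].
    + exists l. split; auto. split.
      * intros Hls. eapply least_iff; eauto.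
      * intros c Hcl. destruct (classic (theta c x y)) as [Hc1 | Hc1].
        -- right. apply Hi. intros u v. split.
           ++ apply le_iff; auto.
           ++ apply le_iff. apply Hl. exact Hc1.
        -- left. apply least_iff. eapply (empty_lemma c l x y); eauto.
           intros d Hd. apply le_iff. intros u v Huv.
           eapply le_iff. apply Hl. exact Hd. eapply le_iff; eauto.
    + exfalso.
      set (z := comp (ad a) a).
      assert (Hz : forall u v, ~ theta z u v).
      { apply least_iff. intros b. apply le_iff. intros u v Huv.
        apply Hc in Huv. destruct Huv as (w & H1 & H2). apply Ha in H1.
        destruct H1 as [<- H1]. exfalso; eauto. }
      assert (Hg : is_glb meet Sx z).
      { split.
        - intros s _. apply le_iff. intros u v Huv. exfalso; eapply Hz; eauto.
        - intros l Hl. apply le_iff. intros u v Huv. exfalso.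
          eapply (empty_lemma l a x y); eauto.
          }
      eapply Hz. apply (Hco Sx z (ex_intro _ a Haxy) Hg). intros s Hs; exact Hs.
Qed.
End S.

Theorem mainTheorem4 (T : Type) (comp meet : T -> T -> T) (ad : T -> T)
  (X : Type) (theta : T -> X -> X -> Prop)
  (Hrep : is_pfun_rep comp meet ad theta) :
  atomic_rep meet theta <-> complete_rep meet theta.
Proof. exact (@main T comp meet ad X theta Hrep). Qed.
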